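(* When Alice and Bob share $\Theta(\log N)$ EPR pairs, there is a quantum protocol of cost $O(\log N)$ in the entangled-fingerprinting model for the $\mathsf{ABCD}$ problem on $N\times N$ matrices such that every \textsc{yes} instance is accepted (output 1) with probability at least $0.95$ and every \textsc{no} instance is accepted with probability at most $0.55$.
   Context: Throughout, $N=2^n$ for a positive integer $n$, and $\mathsf{SU}(N)$ denotes the group of $N\times N$ complex unitary matrices of determinant $1$. The $\mathsf{ABCD}$ problem: Alice is given $A,C\in\mathsf{SU}(N)$ explicitly and Bob is given $B,D\in\mathsf{SU}(N)$ explicitly; the required output is $1$ (a \textsc{yes} instance) if $\mathrm{Tr}(ABCD)\ge 0.9N$ and $0$ (a \textsc{no} instance) if $\mathrm{Tr}(ABCD)\le 0.1N$, promised that one of these holds. Quantum simultaneous model with entanglement: Alice and Bob share an input-independent entangled state; each applies a quantum operation depending on their own input to their part and sends all their qubits to a third party Charlie, who applies an input-independent projective measurement whose outcome is the output; the cost is the total number of qubits sent to Charlie. The entangled-fingerprinting model is the special case in which Alice and Bob use their entanglement to prepare a state of the form $\frac{1}{\sqrt{2N}}\sum_{i\in[N]}\big(\lvert 0_A 0_B\rangle\lvert u_i\rangle_A\lvert v_i\rangle_B+\lvert 1_A1_B\rangle\lvert u_i'\rangle_A\lvert v_i'\rangle_B\big)$, where the states $\lvert u_i\rangle,\lvert u_i'\rangle$ are held (prepared) by Alice and $\lvert v_i\rangle,\lvert v_i'\rangle$ by Bob, and send everything to Charlie; Charlie uncomputes the second qubit (obtaining $\frac{1}{\sqrt{2N}}\sum_i(\lvert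 0\rangle\lvert u_i\rangle\lvert v_i\rangle+\lvert1\rangle\lvert u_i'\rangle\lvert v_i'\rangle)$), performs a swap of the last two registers controlled on the first qubit, measures the first qubit in the Hadamard basis, and outputs $1$ iff the outcome is $\lvert +\rangle$ (possibly repeated in parallel with fresh copies, with the output computed from the swap-test statistics). *)

(* Defs.v *)
From HB Require Import structures.
From mathcomp Require Import all_boot all_order all_algebra.
From mathcomp Require Import complex.
Set Implicit Arguments. Unset Strict Implicit. Unset Printing Implicit Defensive.
Import Order.TTheory GRing.Theory Num.Theory.
Local Open Scope ring_scope.

Section Defs.
Variable R : rcfType.
Local Notation C := (R[i]).

Definition adjmx (m p : nat) (A : 'M[C]_(m, p)) : 'M[C]_(p, m) :=
  (map_mx (fun z : C => z^*) A)^T.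

Definition SU (N : nat) (A : 'M[C]_N) : Prop :=
  A *m adjmx A = 1%:M /\ \det A = 1.

(* a pure state on a register indexed by the finite type T is a function T -> C *)
Definition inner (T : finType) (f g : T -> C) : C := \sum_(t : T) (f t)^* * g t.

(* orthonormal family of vectors (the images of the computational basis under
   an isometry): this is exactly what a local isometry applied to Alice's (or
   Bob's) half of the n EPR pairs can produce *)
Definition orthonormal_family (N d : nat) (u : 'I_N -> 'I_d -> C) : Prop :=
  forall i j : 'I_N, inner (u i) (u j) = (i == j)%:R.

(* Charlie's state after uncomputing the second qubit:
   1/sqrt(2N) sum_i (|0>|u_i>|v_i> + |1>|u'_i>|v'_i>),
   register = (control qubit, Alice's register, Bob's register) *)
Definition ef_state (N d : nat) (u u' v v' : 'I_N -> 'I_d -> C)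
  : bool * 'I_d * 'I_d -> C :=
  fun '(b, x, y) =>
    (sqrtC (2 * N%:R))^-1 *
    \sum_(i < N) (if b then u' i x * v' i y else u i x * v i y).

Definition cswap (d : nat) (psi : bool * 'I_d * 'I_d -> C)
  : bool * 'I_d * 'I_d -> C :=
  fun '(b, x, y) => if b then psi (b, y, x) else psi (b, x, y).

(* probability that measuring the first qubit in the Hadamard basis gives |+> *)
Definition prob_plus (d : nat) (psi : bool * 'I_d * 'I_d -> C) : C :=
  \sum_(x : 'I_d) \sum_(y : 'I_d)
     `| (sqrtC 2)^-1 * (psi (false, x, y) + psi (true, x, y)) | ^+ 2.

Definition ef_accept (N d : nat) (u u' v v' : 'I_N -> 'I_d -> C) : C :=
  prob_plus (cswap (ef_state u u' v v')).

(* k independent parallel copies, each outcome |+> with probability p; the final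
   output is a (input-independent) function of the k outcomes (true = |+>) *)
Definition repeat_accept (k : nat) (p : C) (post : k.-tuple bool -> bool) : C :=
  \sum_(t : k.-tuple bool)
     (post t)%:R * \prod_(j < k) (if tnth t j then p else 1 - p).

End Defs.

(* resources: each copy uses n+1 EPR pairs (n for the index i in [N], N = 2^n,
   and one for the correlated control qubits |0_A 0_B> + |1_A 1_B>), and sends
   1 + m qubits from Alice and 1 + m qubits from Bob to Charlie *)
Definition ef_cost (m k : nat) : nat := (k * (2 * m + 2))%N.
Definition ef_epr (n k : nat) : nat := (k * (n + 1))%N.

(* Main.v *)
Require Import Defs.
From HB Require Import structures.
From mathcomp Require Import all_boot all_order all_algebra.
From mathcomp Require Import complex.
From mathcomp Require Import ring zify.
Import Order.TTheory GRing.Theory Num.Theory.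
Local Open Scope ring_scope.

Set Implicit Arguments.
Section S.
Variable R : rcfType.
Local Notation C := (R[i]).

Lemma bil d n (p q r s : 'I_n -> 'I_d -> C) :
  \sum_(x : 'I_d) \sum_(y : 'I_d) (\sum_(i < n) p i x * q i y) * (\sum_(j < n) r j x * s j y)^*
  = \sum_(i < n) \sum_(j < n) inner (r j) (p i) * inner (s j) (q i).
Proof.
rewrite /inner.
transitivity (\sum_(x : 'I_d) \sum_(y : 'I_d) \sum_(i < n) \sum_(j < n)
   ((r j x)^* * p i x) * ((s j y)^* * q i y)).
  apply: eq_bigr => x _; apply: eq_bigr => y _.
  rewrite rmorph_sum mulr_suml; apply: eq_bigr => i _.
  rewrite mulr_sumr; apply: eq_bigr => j _.
  rewrite rmorphM /=; ring.
symmetry.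
under eq_bigr => i _ do under eq_bigr => j _ do rewrite mulr_suml.
under eq_bigr => i _ do under eq_bigr => j _ do under eq_bigr => x _ do rewrite mulr_sumr.
under eq_bigr => i _ do rewrite exchange_big.
rewrite exchange_big; apply: eq_bigr => x _.
under eq_bigr => i _ do rewrite exchange_big.
rewrite exchange_big; apply: eq_bigr => y _.
by [].
Qed.

Lemma innerC d (f g : 'I_d -> C) : inner g f = (inner f g)^*.
Proof.
rewrite /inner rmorph_sum; apply: eq_bigr => x _.
by rewrite rmorphM /= conjCK mulrC.
Qed.

Lemma sum_delta2 N (i : 'I_N) :
  \sum_(j < N) (j == i)%:R * (j == i)%:R = 1 :> C.
Proof.
rewrite (bigD1 i) //= eqxx mulr1 big1 ?addr0 // => j /negbTE ->.
by rewrite mulr0.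
Qed.

Lemma sumON N d (u : 'I_N -> 'I_d -> C) (v : 'I_N -> 'I_d -> C) :
  orthonormal_family u -> orthonormal_family v ->
  \sum_(i < N) \sum_(j < N) inner (u j) (u i) * inner (v j) (v i) = N%:R.
Proof.
move=> Hu Hv.
under eq_bigr => i _ do under eq_bigr => j _ do rewrite Hu Hv.
under eq_bigr => i _ do rewrite sum_delta2.
by rewrite sumr_const card_ord.
Qed.

Definition TT N d (u u' v v' : 'I_N -> 'I_d -> C) : C :=
  \sum_(i < N) \sum_(j < N) inner (u i) (v' j) * inner (v i) (u' j).

Lemma accept_formula N d (u u' v v' : 'I_N -> 'I_d -> C) :
  (0 < N)%N ->
  orthonormal_family u -> orthonormal_family u' ->
  orthonormal_family v -> orthonormal_family v' ->
  ef_accept u u' v v' = 2^-1 + (TT u u' v v' + (TT u u' v v')^*) / (4 * N%:R).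
Proof.
move=> N0 Hu Hu' Hv Hv'.
set c : C := (sqrtC 2 * sqrtC (2 * N%:R))^-1.
have c0 : 0 <= c by rewrite invr_ge0 mulr_ge0 // sqrtC_ge0 // mulr_ge0 // ler0n.
have cc : c * c = (4 * N%:R)^-1.
  have h2 : sqrtC 2 != 0 :> C by rewrite sqrtC_eq0 pnatr_eq0.
  have hN : sqrtC (2 * N%:R) != 0 :> C.
    by rewrite sqrtC_eq0 mulf_neq0 // pnatr_eq0 -lt0n.
  rewrite /c -invrM ?unitfE ?mulf_neq0 //.
  rewrite mulrACA -[sqrtC 2 * _]expr2 -[sqrtC (2 * _) * _]expr2 !sqrtCK.
  rewrite mulrA; congr ((_ * _)^-1); ring.
rewrite /ef_accept /prob_plus /cswap /ef_state /=.
transitivity (\sum_(x : 'I_d) \sum_(y : 'I_d) (4 * N%:R)^-1 *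
   ((\sum_(i < N) u i x * v i y) * (\sum_(j < N) u j x * v j y)^* +
    (\sum_(i < N) v' i x * u' i y) * (\sum_(j < N) v' j x * u' j y)^* +
    (\sum_(i < N) u i x * v i y) * (\sum_(j < N) v' j x * u' j y)^* +
    (\sum_(i < N) v' i x * u' i y) * (\sum_(j < N) u j x * v j y)^*)).
  apply: eq_bigr => x _; apply: eq_bigr => y _.
  have -> : \sum_(i < N) u' i y * v' i x = \sum_(i < N) v' i x * u' i y by apply: eq_bigr => i _; rewrite mulrC.
  rewrite -mulrDr mulrA -invfM -/c.
  rewrite normrM exprMn normCK (normCK (_ + _)) (geC0_conj c0) cc rmorphD /=.
  congr (_ * _); ring.
under eq_bigr => x _ do rewrite -mulr_sumr.
rewrite -mulr_sumr.
under eq_bigr => x _ do rewrite !big_split.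
rewrite !big_split /= !bil (sumON Hu Hv) (sumON Hv' Hu').
have -> : \sum_(i < N) \sum_(j < N) inner (v' j) (u i) * inner (u' j) (v i) = (TT u u' v v')^*.
  rewrite /TT rmorph_sum; apply: eq_bigr => i _; rewrite rmorph_sum; apply: eq_bigr => j _.
  by rewrite rmorphM /= -!innerC.
have -> : \sum_(i < N) \sum_(j < N) inner (u j) (v' i) * inner (v j) (u' i) = TT u u' v v'.
  by rewrite /TT exchange_big.
have NN : N%:R != 0 :> C by rewrite pnatr_eq0 -lt0n.
by field; rewrite NN.
Qed.

Lemma conj_le (T y : C) : 0 <= y -> (T <= y) || (y <= T) -> T^* = T.
Proof.
move=> y0 /orP[H|H].
  have -> : T = y - (y - T) by rewrite opprB addrC subrK.
  by rewrite rmorphB /= (geC0_conj y0) geC0_conj // subr_ge0.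
by rewrite geC0_conj // (le_trans y0 H).
Qed.

Lemma rep1 (p : C) : repeat_accept p (fun t : 1.-tuple bool => tnth t ord0) = p.
Proof.
rewrite /repeat_accept (reindex (fun b : bool => [tuple b])) /=.
  rewrite big_bool /= !big_ord1 /=.
  by rewrite mul1r mul0r addr0.
exists (fun t : 1.-tuple bool => tnth t ord0) => [b _|t _] //.
apply: eq_from_tnth => j; rewrite (ord1 j).
by [].
Qed.
End S.

Unset Implicit Arguments.
Theorem theorem4p2 (R : rcfType) :
  exists c : nat,
  forall n : nat, (0 < n)%N ->
  exists (m k : nat)
         (alice : 'M[R[i]]_(2 ^ n) -> 'M[R[i]]_(2 ^ n) ->
                  ('I_(2 ^ n) -> 'I_(2 ^ m) -> R[i]) * ('I_(2 ^ n) -> 'I_(2 ^ m) -> R[i]))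
         (bob : 'M[R[i]]_(2 ^ n) -> 'M[R[i]]_(2 ^ n) ->
                  ('I_(2 ^ n) -> 'I_(2 ^ m) -> R[i]) * ('I_(2 ^ n) -> 'I_(2 ^ m) -> R[i]))
         (post : k.-tuple bool -> bool),
    [/\ (0 < k)%N, (ef_cost m k <= c * n)%N & (n <= ef_epr n k <= c * n)%N] /\
    [/\
        (forall A C : 'M[R[i]]_(2 ^ n), SU A -> SU C ->
            orthonormal_family (alice A C).1 /\ orthonormal_family (alice A C).2),
        (forall B D : 'M[R[i]]_(2 ^ n), SU B -> SU D ->
            orthonormal_family (bob B D).1 /\ orthonormal_family (bob B D).2)
      & forall A B C D : 'M[R[i]]_(2 ^ n), SU A -> SU B -> SU C -> SU D ->
          let p := ef_accept (alice A C).1 (alice A C).2 (bob B D).1 (bob B D).2 in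
          ((9 / 10) * (2 ^ n)%:R <= \tr (A *m B *m C *m D) ->
             19 / 20 <= repeat_accept p post) /\
          (\tr (A *m B *m C *m D) <= (1 / 10) * (2 ^ n)%:R ->
             repeat_accept p post <= 11 / 20)].
Proof.
exists 4%N => n n0.
pose N := (2 ^ n)%N.
pose alice := fun A C : 'M[R[i]]_N =>
  ((fun (i : 'I_N) (x : 'I_N) => (A i x)^*), (fun (i : 'I_N) (x : 'I_N) => C i x)).
pose bob := fun B D : 'M[R[i]]_N =>
  ((fun (i : 'I_N) (x : 'I_N) => (D x i)^*), (fun (i : 'I_N) (x : 'I_N) => B x i)).
exists n, 1%N, alice, bob, (fun t : 1.-tuple bool => tnth t ord0).
have rowON : forall A : 'M[R[i]]_N, SU A -> orthonormal_family (fun i x => (A i x)^*).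
  move=> A [HA _] i j; rewrite /inner.
  have := congr1 (fun M : 'M[R[i]]_N => M i j) HA; rewrite !mxE => <-.
  by apply: eq_bigr => x _; rewrite conjCK !mxE.
have rowON' : forall A : 'M[R[i]]_N, SU A -> orthonormal_family (fun i x => A i x).
  move=> A [HA _] i j; rewrite /inner.
  have := congr1 (fun M : 'M[R[i]]_N => M j i) HA; rewrite !mxE eq_sym => <-.
  by apply: eq_bigr => x _; rewrite !mxE mulrC.
have colON : forall A : 'M[R[i]]_N, SU A -> orthonormal_family (fun i x => (A x i)^*).
  move=> A [HA _] i j; rewrite /inner.
  have := congr1 (fun M : 'M[R[i]]_N => (M i j)^*) (mulmx1C HA); rewrite !mxE rmorph_nat => <-.
  rewrite rmorph_sum; apply: eq_bigr => x _.
  by rewrite rmorphM /= !mxE.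
have colON' : forall A : 'M[R[i]]_N, SU A -> orthonormal_family (fun i x => A x i).
  move=> A [HA _] i j; rewrite /inner.
  have := congr1 (fun M : 'M[R[i]]_N => M i j) (mulmx1C HA); rewrite !mxE => <-.
  by apply: eq_bigr => x _; rewrite !mxE.
split.
  by rewrite /ef_cost /ef_epr; split; lia.
split.
- by move=> A C HA HC; split; [apply: rowON | apply: rowON'].
- by move=> B D HB HD; split; [apply: colON | apply: colON'].
move=> A B C D HA HB HC HD p.
rewrite rep1 /p accept_formula; last first.
- exact: colON'.
- exact: colON.
- exact: rowON'.
- exact: rowON.
- by rewrite expn_gt0.
have ET : TT R (alice A C).1 (alice A C).2 (bob B D).1 (bob B D).2 = \tr (A *m B *m C *m D).
  have -> : A *m B *m C *m D = (A *m B) *m (C *m D) by rewrite !mulmxA.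
  rewrite /TT /mxtrace; apply: eq_bigr => i _; rewrite mxE; apply: eq_bigr => j _.
  rewrite !mxE /inner /=; congr (_ * _); apply: eq_bigr => x _; rewrite conjCK //.
  by rewrite mulrC.
rewrite ET; set T := \tr _.
have NN : (2 ^ n)%:R != 0 :> R[i] by rewrite pnatr_eq0 expn_eq0.
have N0 : 0 <= (2 ^ n)%:R :> R[i] by rewrite ler0n.
split=> H.
  rewrite (@conj_le _ T (9 / 10 * (2 ^ n)%:R)); last first.
  - by rewrite H orbT.
  - by rewrite mulr_ge0 // divr_ge0 // ler0n.
  rewrite -subr_ge0.
  have -> : 2^-1 + (T + T) / (4 * (2 ^ n)%:R) - 19 / 20 =
            (T - 9 / 10 * (2 ^ n)%:R) / (2 * (2 ^ n)%:R) by field; rewrite NN.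
  by rewrite divr_ge0 ?mulr_ge0 ?ler0n // subr_ge0.
rewrite (@conj_le _ T (1 / 10 * (2 ^ n)%:R)); last first.
- by rewrite H.
- by rewrite mulr_ge0 // divr_ge0 // ler0n.
rewrite -subr_ge0.
have -> : 11 / 20 - (2^-1 + (T + T) / (4 * (2 ^ n)%:R)) =
          (1 / 10 * (2 ^ n)%:R - T) / (2 * (2 ^ n)%:R) by field; rewrite NN.
by rewrite divr_ge0 ?mulr_ge0 ?ler0n // subr_ge0.
Qed.
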